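(* Let $M$ be an abelian group of exponent greater than $2$. Then for the loop $L_M$: $N_\lambda(L_M)=\{(A,x)\in L_M : x^2=1\}$, $N_\mu(L_M)=N_\rho(L_M)=\{(1,x): x\in M\}$, and $Z(L_M)=N(L_M)=C(L_M)=\{(1,x): x\in M,\ x^2=1\}$.
   Context: Let $K=\{1,a,b,c\}$ be the Klein four-group. Set $L_M=K\times M$ with the operation $(A,x)*(B,y)=(AB,xy)$ if $B=1$, and $(A,x)*(B,y)=(AB,x^{-1}y)$ if $B\neq 1$. For a loop $L$: the left nucleus is $N_\lambda(L)=\{u:(uy)z=u(yz)\ \forall y,z\}$, the middle nucleus $N_\mu(L)=\{u:(xu)z=x(uz)\ \forall x,z\}$, the right nucleus $N_\rho(L)=\{u:(xy)u=x(yu)\ \forall x,y\}$, the nucleus $N(L)=N_\lambda\cap N_\mu\cap N_\rho$, the commutant $C(L)=\{u: ux=xu\ \forall x\}$, and the center $Z(L)=N(L)\cap C(L)$. *)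

(* Defs.v *)
(* The abelian group M (possibly infinite) is a zmodType,
   written additively: x^2 = 1 becomes x + x = 0, x^{-1} y becomes -x + y. *)
From mathcomp Require Import all_boot all_order all_algebra.
Set Implicit Arguments. Unset Strict Implicit. Unset Printing Implicit Defensive.
Import GRing.Theory.
Local Open Scope ring_scope.

Inductive K4 := K1 | Ka | Kb | Kc.

Definition K4mul (A B : K4) : K4 :=
  match A, B with
  | K1, X => X
  | X, K1 => X
  | Ka, Ka => K1 | Kb, Kb => K1 | Kc, Kc => K1
  | Ka, Kb => Kc | Kb, Ka => Kc
  | Ka, Kc => Kb | Kc, Ka => Kb
  | Kb, Kc => Ka | Kc, Kb => Ka
  end.

Definition LM_op (M : zmodType) (p q : K4 * M) : K4 * M :=
  let: (A, x) := p in let: (B, y) := q in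
  match B with
  | K1 => (K4mul A B, x + y)
  | _ => (K4mul A B, - x + y)
  end.

Section LoopNotions.
Variables (T : Type) (op : T -> T -> T).
Definition left_nucleus (u : T) : Prop :=
  forall y z, op (op u y) z = op u (op y z).
Definition middle_nucleus (u : T) : Prop :=
  forall x z, op (op x u) z = op x (op u z).
Definition right_nucleus (u : T) : Prop :=
  forall x y, op (op x y) u = op x (op y u).
Definition nucleus (u : T) : Prop :=
  [/\ left_nucleus u, middle_nucleus u & right_nucleus u].
Definition commutant (u : T) : Prop := forall x, op u x = op x u.
Definition center (u : T) : Prop := nucleus u /\ commutant u.
End LoopNotions.

(* Main.v *)
Require Import Defs.
From mathcomp Require Import all_boot all_order all_algebra.
Import GRing.Theory.
Local Open Scope ring_scope.

Lemma negx (M : zmodType) (x : M) : x + x = 0 <-> - x = x.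
Proof. split=> H. by apply/eqP; rewrite eq_sym -addr_eq0 H. by apply/eqP; rewrite addr_eq0 H. Qed.

Lemma ln_suff (M : zmodType) (u : K4 * M) : - u.2 = u.2 -> left_nucleus (@LM_op M) u.
Proof.
case: u => A x /= Hx [B y] [C z]; case: A; case: B; case: C => /=; congr pair; rewrite ?opprD ?opprK ?Hx ?addrA //.
Qed.

Lemma c_suff (M : zmodType) (x : M) : - x = x -> commutant (@LM_op M) (K1, x).
Proof.
move=> Hx [B y]; case: B => /=; congr pair; rewrite ?Hx addrC //.
Qed.
Lemma m_suff (M : zmodType) (x : M) : middle_nucleus (@LM_op M) (K1, x).
Proof.
move=> [A y] [C z]; case: A; case: C => /=; congr pair; rewrite ?opprD ?opprK ?addrA //.
Qed.
Lemma r_suff (M : zmodType) (x : M) : right_nucleus (@LM_op M) (K1, x).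
Proof.
move=> [A y] [B z]; case: A; case: B => /=; congr pair; rewrite ?opprD ?opprK ?addrA //.
Qed.

Lemma ln_nec (M : zmodType) (u : K4 * M) : left_nucleus (@LM_op M) u -> - u.2 = u.2.
Proof.
case: u => A x /= /(_ (Ka, 0) (Kb, 0)) /(congr1 snd).
case: A => /=; rewrite ?addr0 ?oppr0 ?opprK ?addr0 // => <-.
Qed.

Section S.
Variables (M : zmodType) (x0 : M) (hx0 : x0 + x0 != 0).
Lemma bad : - x0 != x0.
Proof. by apply: contra hx0 => /eqP /negx ->. Qed.


Lemma m_nec (u : K4 * M) : middle_nucleus (@LM_op M) u -> u.1 = K1.
Proof.
case: u => B y /=; case: B => // H.
- move: (H (K1, x0) (Kb, 0)) => /(congr1 snd) /=; rewrite ?oppr0 ?add0r ?addr0 ?opprD ?opprK => /addIr E0; by move: bad; rewrite -E0 eqxx.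
- move: (H (K1, x0) (Ka, 0)) => /(congr1 snd) /=; rewrite ?oppr0 ?add0r ?addr0 ?opprD ?opprK => /addIr E0; by move: bad; rewrite -E0 eqxx.
- move: (H (K1, x0) (Ka, 0)) => /(congr1 snd) /=; rewrite ?oppr0 ?add0r ?addr0 ?opprD ?opprK => /addIr E0; by move: bad; rewrite -E0 eqxx.
Qed.

Lemma r_nec (u : K4 * M) : right_nucleus (@LM_op M) u -> u.1 = K1.
Proof.
case: u => C z /=; case: C => // H.
- move: (H (K1, x0) (Kb, 0)) => /(congr1 snd) /=; rewrite ?oppr0 ?add0r ?addr0 ?opprD ?opprK => /addIr E0; by move: bad; rewrite -E0 eqxx.
- move: (H (K1, x0) (Ka, 0)) => /(congr1 snd) /=; rewrite ?oppr0 ?add0r ?addr0 ?opprD ?opprK => /addIr E0; by move: bad; rewrite -E0 eqxx.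
- move: (H (K1, x0) (Ka, 0)) => /(congr1 snd) /=; rewrite ?oppr0 ?add0r ?addr0 ?opprD ?opprK => /addIr E0; by move: bad; rewrite -E0 eqxx.
Qed.

Lemma c_nec (u : K4 * M) : commutant (@LM_op M) u -> u.1 = K1 /\ - u.2 = u.2.
Proof.
case: u => A x /= H.
have A1 : A = K1.
  case: A H => // H; move: (H (K1, x0)) => /(congr1 snd) /=;
  rewrite [_ + x]addrC => /addrI E; by move: bad; rewrite -E eqxx.
subst A; split => //.
by move: (H (Ka, 0)) => /(congr1 snd) /=; rewrite addr0 add0r.
Qed.
End S.

Theorem proposition3p6 (M : zmodType) (hexp : exists x : M, x + x != 0) :
  (forall u : K4 * M, left_nucleus (@LM_op M) u <-> u.2 + u.2 = 0) /\
  (forall u : K4 * M, middle_nucleus (@LM_op M) u <-> u.1 = K1) /\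
  (forall u : K4 * M, right_nucleus (@LM_op M) u <-> u.1 = K1) /\
  (forall u : K4 * M, center (@LM_op M) u <-> u.1 = K1 /\ u.2 + u.2 = 0) /\
  (forall u : K4 * M, nucleus (@LM_op M) u <-> u.1 = K1 /\ u.2 + u.2 = 0) /\
  (forall u : K4 * M, commutant (@LM_op M) u <-> u.1 = K1 /\ u.2 + u.2 = 0).
Proof.
case: hexp => x0 hx0.
have LN : forall u : K4 * M, left_nucleus (@LM_op M) u <-> u.2 + u.2 = 0.
  move=> u; split => h; [apply/negx; exact: ln_nec | apply: ln_suff; exact/negx].
have MN : forall u : K4 * M, middle_nucleus (@LM_op M) u <-> u.1 = K1.
  move=> [A x]; split; [exact: m_nec hx0 _ | move=> /= ->; exact: m_suff].
have RN : forall u : K4 * M, right_nucleus (@LM_op M) u <-> u.1 = K1.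
  move=> [A x]; split; [exact: r_nec hx0 _ | move=> /= ->; exact: r_suff].
have NN : forall u : K4 * M, nucleus (@LM_op M) u <-> u.1 = K1 /\ u.2 + u.2 = 0.
  move=> u; split; first by case=> /LN ? /MN ? _.
  by case=> h1 h2; split; [apply/LN | apply/MN | apply/RN].
have CN : forall u : K4 * M, commutant (@LM_op M) u <-> u.1 = K1 /\ u.2 + u.2 = 0.
  move=> [A x]; split; first by move/(@c_nec M x0 hx0 (A, x)) => [-> /negx].
  by case=> /= -> /negx; exact: c_suff.
do 5 (split => //).
- by case=> /NN.
- by move=> h; split; [apply/NN | apply/CN].
Qed.
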